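(* For every positive integer $\ell$, \[ \frac{\sum_{d\mid\ell}c_\ell(d)}{\nu(\ell)}\le \ell^{-\frac{\log(3/2)}{\log 2}}. \]
   Context: $\nu$ is the completely multiplicative function with $\nu(p)=p+1$ for primes $p$. The Chebyshev coefficients $c_{j,n}$ are defined by $x^n=\sum_{j=0}^n c_{j,n}U_j(x/2)$, with $U_j$ the Chebyshev polynomials of the second kind; for $d\mid\ell$, $c_\ell(d)=\prod_{p\mid\ell}c_{j_p,n_p}$ where $p^{j_p}\|d$, $p^{n_p}\|\ell$. *)

(* Defs.v *)
From Stdlib Require Import Reals.
From mathcomp Require Import all_boot.

Set Implicit Arguments.
Unset Strict Implicit.
Unset Printing Implicit Defensive.

Local Open Scope R_scope.

Fixpoint chebU (j : nat) (x : R) : R :=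
  match j with
  | O => 1
  | S O => (2 * x)
  | S ((S j') as j1) => (2 * x * chebU j1 x - chebU j' x)
  end.

Definition cheb_coeffs (c : nat -> nat -> R) : Prop :=
  forall (n : nat) (x : R),
    (x ^ n) = sum_f_R0 (fun j => (c j n * chebU j (x / 2))) n.

Definition sumR (s : seq R) : R := foldr Rplus 0 s.
Definition prodR (s : seq R) : R := foldr Rmult 1 s.

Definition nu (l : nat) : nat := (\prod_(p <- primes l) (p.+1 ^ logn p l))%N.

Definition c_l (c : nat -> nat -> R) (l d : nat) : R :=
  prodR [seq c (logn p d) (logn p l) | p <- primes l].

(* Main.v *)
Require Import Defs.
From Stdlib Require Import Reals Lra.
From mathcomp Require Import all_boot all_order all_algebra.
From mathcomp Require Import Rstruct.
Import Order.TTheory GRing.Theory Num.Theory.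

Section RH.
Local Open Scope R_scope.
Lemma half2 (x : R) : x = 2 * (x / 2).
Proof. field. Qed.
End RH.

Section Cheb.
Local Open Scope ring_scope.

Fixpoint Up (j : nat) : {poly R} :=
  match j with
  | O => 1
  | S O => 'X
  | S ((S j') as j1) => 'X * Up j1 - Up j'
  end.

Definition Upm (j : nat) : {poly R} := if j is j'.+1 then Up j' else 0.

Lemma XUp j : 'X * Up j = Up j.+1 + Upm j.
Proof.
case: j => [|j] /=; first by rewrite mulr1 addr0.
by rewrite subrK.
Qed.

Lemma Up_eval j x : (Up j).[x] = chebU j (x / 2).
Proof.
suff: (Up j).[x] = chebU j (x / 2) /\ (Up j.+1).[x] = chebU j.+1 (x / 2) by case.
elim: j => [|j [IH1 IH2]].
  by rewrite /= hornerC hornerX; split => //; apply: half2.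
split => //.
change (Up j.+2) with ('X * Up j.+1 - Up j).
rewrite hornerD hornerN mulrC hornerMX IH1 IH2 /= mulrC.
by rewrite -half2.
Qed.

Lemma Up_coef j : (Up j)`_j = 1 /\ forall i, (j < i)%N -> (Up j)`_i = 0.
Proof.
suff: ((Up j)`_j = 1 /\ forall i, (j < i)%N -> (Up j)`_i = 0) /\
      ((Up j.+1)`_j.+1 = 1 /\ forall i, (j.+1 < i)%N -> (Up j.+1)`_i = 0) by case.
elim: j => [|j [[IH1 IH1'] [IH2 IH2']]].
  split; split.
  - by rewrite /= coefC.
  - by move=> [|i] //= _; rewrite coefC.
  - by rewrite /= coefX.
  - by move=> [|[|i]] //= _; rewrite coefX.
split; first by split.
change (Up j.+2) with ('X * Up j.+1 - Up j).
split.
  by rewrite coefB coefXM /= IH2 IH1' // subr0.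
move=> i Hi; rewrite coefB coefXM.
case: i Hi => [|i] // Hi /=.
by rewrite IH2' // IH1' ?subr0 //; apply: ltn_trans Hi; apply: ltn_trans (ltnSn _) _.
Qed.

Lemma coef_top n (a : nat -> R) : (\sum_(j < n.+1) a j *: Up j)`_n = a n.
Proof.
rewrite coef_sum big_ord_recr /= coefZ (proj1 (Up_coef n)) mulr1.
rewrite big1 ?add0r // => i _; rewrite coefZ (proj2 (Up_coef i)) ?mulr0 //.
Qed.

Lemma uniq_coef n (a : nat -> R) : \sum_(j < n.+1) a j *: Up j = 0 ->
  forall j, (j <= n)%N -> a j = 0.
Proof.
elim: n => [|n IH] H j Hj.
  by move: Hj; rewrite leqn0 => /eqP ->; rewrite -(coef_top 0 a) H coef0.
have an : a n.+1 = 0 by rewrite -(coef_top n.+1 a) H coef0.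
move: Hj; rewrite leq_eqVlt => /orP [/eqP -> //|Hj].
apply: IH => //.
by move: H; rewrite big_ord_recr /= an scale0r addr0.
Qed.

Lemma poly_eq0_all (p : {poly R}) : (forall x, p.[x] = 0) -> p = 0.
Proof.
move=> H; apply/eqP; apply/negPn/negP => Hp.
have := max_poly_roots (rs := [seq (i%:R : R) | i <- iota 0 (size p)]) Hp.
rewrite size_map size_iota ltnn; move=> Hf.
suff : false by [].
apply: Hf.
  by apply/allP => x _; apply/rootP; apply: H.
rewrite map_inj_uniq ?iota_uniq //.
by move=> i k /eqP; rewrite eqr_nat => /eqP.
Qed.

End Cheb.
Section B.
Local Open Scope ring_scope.

Fixpoint bc (n : nat) : nat -> R :=
  match n with
  | O => fun j => if j is O then 1 else 0
  | S n' => fun j => (if j is S j' then bc n' j' else 0) + bc n' j.+1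
  end.

Lemma bc_big n j : (n < j)%N -> bc n j = 0.
Proof.
elim: n j => [|n IH] j H; first by case: j H.
case: j H => [|j] H; first by rewrite ltn0 in H.
simpl. rewrite (IH j) // (IH j.+2) ?addr0 //. by move: H; rewrite !ltnS => H; apply: leqW; apply: ltnW.
Qed.

Lemma bc_ge0 n j : 0 <= bc n j.
Proof.
elim: n j => [|n IH] j.
  by case: j => [|j] /=; rewrite ?ler01 ?lexx.
case: j => [|j] /=; first by rewrite add0r IH.
by rewrite addr_ge0.
Qed.

Lemma bc_sum n M : \sum_(j < M) bc n j <= 2 ^+ n.
Proof.
elim: n M => [|n IH] M.
  case: M => [|M]; first by rewrite big_ord0 expr0 ler01.
  by rewrite big_ord_recl /= big1 ?addr0 ?expr0 //.
rewrite /= big_split /= exprS mulr2n mulrDl mul1r.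
apply: lerD.
  case: M => [|M]; first by rewrite big_ord0; apply: exprn_ge0; apply: addr_ge0; apply: ler01.
  by rewrite big_ord_recl /= add0r; apply: IH.
apply: le_trans (IH M.+1).
by rewrite big_ord_recl /= lerDr bc_ge0.
Qed.

Lemma Xn_exp n : 'X^n = \sum_(j < n.+1) bc n j *: Up j.
Proof.
elim: n => [|n IH].
  by rewrite big_ord_recl big_ord0 /= expr0 scale1r addr0.
rewrite exprS IH mulr_sumr.
under eq_bigr => j _ do rewrite -scalerAr XUp scalerDr.
rewrite big_split /=.
under [in RHS]eq_bigr => j _ do rewrite /= scalerDl.
rewrite big_split /=; congr (_ + _).
  by rewrite [in RHS]big_ord_recl /= scale0r add0r.
rewrite big_ord_recl /= scaler0 add0r.
rewrite [in RHS]big_ord_recr [in RHS]big_ord_recr /=.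
rewrite !bc_big // !scale0r !addr0.
by [].
Qed.

End B.

Section SumConv.
Lemma sum_f_big (f : nat -> R) n : sum_f_R0 f n = (\sum_(j < n.+1) f j)%R.
Proof.
elim: n => [|n IH]; first by rewrite big_ord_recl big_ord0 /= GRing.addr0.
by rewrite /= IH [in RHS]big_ord_recr.
Qed.
End SumConv.

Section CB.
Local Open Scope ring_scope.
Lemma c_eq_bc (c : nat -> nat -> R) (hc : cheb_coeffs c) n j :
  (j <= n)%N -> c j n = bc n j.
Proof.
move=> Hj.
have H : \sum_(j < n.+1) (c j n - bc n j) *: Up j = 0.
  apply: poly_eq0_all => x.
  rewrite horner_sum.
  under eq_bigr => i _ do rewrite hornerZ Up_eval GRing.mulrBl.
  rewrite sumrB.
  have := hc n x; rewrite sum_f_big => <-.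
  have E : x ^+ n = \sum_(i < n.+1) bc n i * chebU i (x / 2).
    rewrite -hornerXn (Xn_exp n) horner_sum; apply: eq_bigr => i _.
    by rewrite hornerZ Up_eval.
  by rewrite RpowE -E subrr.
by apply/eqP; rewrite -subr_eq0; apply/eqP; exact: (uniq_coef n (fun j => c j n - bc n j) H j Hj).
Qed.
End CB.
Section Real.
Local Open Scope R_scope.

Definition alpha := ln (3 / 2) / ln 2.

Lemma ln2_pos : 0 < ln 2.
Proof. have := ln_lt_2; lra. Qed.

Lemma alpha_le : alpha <= 2 / 3.
Proof.
rewrite /alpha.
have h2 := ln2_pos.
have H : ln ((3/2) ^ 3) <= ln (2 ^ 2).
  apply: Rlt_le; apply: ln_increasing; simpl; lra.
rewrite !ln_pow in H; try lra.
simpl in H.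
apply (Rmult_le_reg_r (ln 2)) => //.
field_simplify; try lra.
Qed.

Lemma Rpower2_alpha : Rpower 2 alpha = 3 / 2.
Proof.
rewrite /Rpower /alpha.
replace (ln (3 / 2) / ln 2 * ln 2) with (ln (3/2)).
  by rewrite exp_ln; lra.
have := ln2_pos; intros; field; lra.
Qed.

Lemma key_ineq (x : R) : 2 <= x -> 2 * Rpower x alpha <= x + 1.
Proof.
move=> Hx.
set t := x / 2.
have Ht : 1 <= t by rewrite /t; lra.
have -> : x = 2 * t by rewrite /t; field.
rewrite -Rpower_mult_distr; try lra.
rewrite Rpower2_alpha.
have H1 : Rpower t alpha <= Rpower t (2/3) by apply: Rle_Rpower => //; apply: alpha_le.
set s := Rpower t (1/3).
have Hs : 1 <= s.
  apply: (Rle_trans _ (Rpower t 0)); first by rewrite Rpower_O; lra.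
  rewrite /s; apply: Rle_Rpower => //; lra.
have E2 : Rpower t (2/3) = s * s.
  by rewrite /s -Rpower_plus; f_equal; field.
have E3 : t = s * s * s.
  rewrite /s -!Rpower_plus.
  replace (1/3 + 1/3 + 1/3) with 1 by field.
  by rewrite Rpower_1; lra.
rewrite E2 in H1.
have Hp : 0 <= (s - 1) * (s - 1) * (2 * s + 1).
  apply: Rmult_le_pos; [apply: Rle_0_sqr | lra].
have : 2 * (3 / 2 * Rpower t alpha) <= 3 * (s * s) by lra.
move: Hp E3; clearbody s t; move=> Hp E3 HH; subst t; nra.
Qed.

End Real.
Section NT.

Lemma primes_pm p k m : prime p -> (0 < m)%N -> ~~ (p %| m)%N ->
  perm_eq (primes (p ^ k.+1 * m)) (p :: primes m).
Proof.
move=> pp m0 npm.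
have pm0 : (0 < p ^ k.+1 * m)%N by rewrite muln_gt0 expn_gt0 prime_gt0.
apply: uniq_perm; first exact: primes_uniq.
  by rewrite /= primes_uniq andbT mem_primes pp m0 /=.
move=> q; rewrite in_cons !mem_primes pm0 m0 /=.
apply/idP/idP.
  case/andP=> pq; rewrite Euclid_dvdM // Euclid_dvdX // andbT.
  case/orP=> [qp|->]; last by rewrite pq orbT.
  by rewrite -(dvdn_prime2 pq pp) qp.
case/orP=> [/eqP->|/andP[pq qm]]; first by rewrite pp dvdn_mulr // dvdn_exp.
by rewrite pq dvdn_mull.
Qed.

Lemma logn_other p q i e : prime p -> q != p -> (0 < e)%N ->
  logn q (p ^ i * e) = logn q e.
Proof.
move=> pp qp e0.
have p0 : (0 < p ^ i)%N by rewrite expn_gt0 prime_gt0.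
rewrite (lognM _ p0 e0) lognX logn_prime //.
by rewrite (negbTE qp) muln0.
Qed.

Lemma logn_self p i e : prime p -> (0 < e)%N -> ~~ (p %| e)%N ->
  logn p (p ^ i * e) = i.
Proof.
move=> pp e0 npe.
have p0 : (0 < p ^ i)%N by rewrite expn_gt0 prime_gt0.
rewrite (lognM _ p0 e0) pfactorK // lognE pp e0 (negbTE npe).
by rewrite addn0.
Qed.

Lemma divisors_pm p k m : prime p -> (0 < m)%N -> ~~ (p %| m)%N ->
  perm_eq (divisors (p ^ k * m)) [seq (p ^ i * e)%N | i <- iota 0 k.+1, e <- divisors m].
Proof.
move=> pp m0 npm.
have pm0 : (0 < p ^ k * m)%N by rewrite muln_gt0 expn_gt0 prime_gt0.
apply: uniq_perm; first exact: divisors_uniq.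
  apply: allpairs_uniq; [exact: iota_uniq | exact: divisors_uniq|].
  move=> [i e] [i' e'] H1 H2 E.
  have [[x y] [_ /= ye [ex ey]]] := allpairsP H1.
  have [[x' y'] [_ /= ye' [ex' ey']]] := allpairsP H2.
  subst i e i' e'; move: E => /= E.
  have y0 : (0 < y)%N by rewrite -dvdn_divisors // in ye; apply: dvdn_gt0 ye.
  have y0' : (0 < y')%N by rewrite -dvdn_divisors // in ye'; apply: dvdn_gt0 ye'.
  have npy : ~~ (p %| y)%N.
    by apply: contra npm => /dvdn_trans; apply; rewrite dvdn_divisors.
  have npy' : ~~ (p %| y')%N.
    by apply: contra npm => /dvdn_trans; apply; rewrite dvdn_divisors.
  have xx : x = x' by rewrite -(logn_self p x y pp y0 npy) E (logn_self p x' y' pp y0' npy').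
  subst x'; congr (_, _).
  have px : (0 < p ^ x)%N by rewrite expn_gt0 prime_gt0.
  by apply/eqP; rewrite -(eqn_pmul2l px) E.
move=> d; rewrite -dvdn_divisors //.
apply/idP/allpairsP.
  move=> dd.
  have d0 : (0 < d)%N by apply: dvdn_gt0 dd.
  have [e pe de] := pfactor_coprime pp d0.
  exists (logn p d, e); split.
  - rewrite mem_iota /= add0n ltnS.
    by rewrite -(logn_self p k m pp m0 npm); apply: dvdn_leq_log.
  - rewrite /= -dvdn_divisors //.
    have : (e %| m * p ^ k)%N by rewrite mulnC; apply: dvdn_trans dd; rewrite de dvdn_mulr.
    by rewrite Gauss_dvdl // coprimeXr // coprime_sym.
  - by rewrite /= {1}de mulnC.
move=> [[i e] [ik ed ->]].
rewrite mem_iota add0n ltnS in ik.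
rewrite -dvdn_divisors // in ed.
rewrite /=.
by apply: dvdn_mul; [apply: dvdn_exp2l|].
Qed.

Lemma nu_mul p k m : prime p -> (0 < m)%N -> ~~ (p %| m)%N ->
  nu (p ^ k.+1 * m) = (p.+1 ^ k.+1 * nu m)%N.
Proof.
move=> pp m0 npm.
rewrite /nu (perm_big _ (primes_pm p k m pp m0 npm)) big_cons logn_self //.
congr (_ * _)%N; apply: eq_big_seq => q qm.
have qp : q != p by apply: contraNneq npm => <-; move: qm; rewrite mem_primes => /and3P[].
by rewrite logn_other.
Qed.

Lemma nu_gt0 l : (0 < nu l)%N.
Proof. by rewrite /nu; elim: (primes l) => [|q s IH]; rewrite ?big_nil ?big_cons // muln_gt0 IH expn_gt0. Qed.

End NT.
Section Main1.
Local Open Scope ring_scope.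

Definition Fc (c : nat -> nat -> R) l := \sum_(d <- divisors l) c_l c l d.

Lemma sumR_big (s : seq nat) (f : nat -> R) : sumR [seq f x | x <- s] = \sum_(x <- s) f x.
Proof. by elim: s => [|x s IH]; rewrite ?big_nil ?big_cons //= IH. Qed.

Lemma prodR_big (s : seq nat) (f : nat -> R) : prodR [seq f x | x <- s] = \prod_(x <- s) f x.
Proof. by elim: s => [|x s IH]; rewrite ?big_nil ?big_cons //= IH. Qed.

Lemma c_l_mul c p k m i e : prime p -> (0 < m)%N -> ~~ (p %| m)%N ->
  e \in divisors m ->
  c_l c (p ^ k.+1 * m) (p ^ i * e) = c i k.+1 * c_l c m e.
Proof.
move=> pp m0 npm ed.
have e0 : (0 < e)%N by rewrite -dvdn_divisors // in ed; apply: dvdn_gt0 ed.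
have npe : ~~ (p %| e)%N.
  by apply: contra npm => /dvdn_trans; apply; rewrite dvdn_divisors.
rewrite /c_l !prodR_big (perm_big _ (primes_pm p k m pp m0 npm)) big_cons.
rewrite (logn_self p i e pp e0 npe) (logn_self p k.+1 m pp m0 npm).
congr (_ * _); apply: eq_big_seq => q qm.
have qp : q != p by apply: contraNneq npm => <-; move: qm; rewrite mem_primes => /and3P[].
by rewrite logn_other // logn_other.
Qed.

Lemma F_mul c p k m : prime p -> (0 < m)%N -> ~~ (p %| m)%N ->
  Fc c (p ^ k.+1 * m) = (\sum_(i <- iota 0 k.+2) c i k.+1) * Fc c m.
Proof.
move=> pp m0 npm.
rewrite /Fc (perm_big _ (divisors_pm p k.+1 m pp m0 npm)).
rewrite big_allpairs_dep /= big_distrl /=.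
apply: eq_big_seq => i _; rewrite big_distrr /=.
apply: eq_big_seq => e ed.
exact: c_l_mul.
Qed.

Lemma A_bounds c (hc : cheb_coeffs c) K :
  Rle 0 (\sum_(i <- iota 0 K.+1) c i K) /\ Rle (\sum_(i <- iota 0 K.+1) c i K) (pow 2 K).
Proof.
have -> : \sum_(i <- iota 0 K.+1) c i K = \sum_(i < K.+1) bc K i.
  rewrite -(big_mkord xpredT (bc K)).
  apply: eq_big_seq => i; rewrite mem_iota add0n ltnS => iK.
  exact: c_eq_bc.
split; apply/RleP.
  by apply: sumr_ge0 => i _; apply: bc_ge0.
by rewrite RpowE; apply: bc_sum.
Qed.

End Main1.
Section Main2.
Local Open Scope R_scope.

Lemma rearr (a b x y : R) : a * b * (x * y) = a * x * (b * y).
Proof. ring. Qed.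

Lemma INR_expn p k : INR (p ^ k)%N = INR p ^ k.
Proof.
elim: k => [|k IH]; first by rewrite expn0.
by rewrite expnS mult_INR IH.
Qed.

Lemma main_claim c (hc : cheb_coeffs c) l : (0 < l)%N ->
  0 <= Fc c l /\ Fc c l * Rpower (INR l) alpha <= INR (nu l).
Proof.
elim/ltn_ind: l => l IH l0.
case: (ltngtP l 1) => [l1|l1|->].
- by move: l0; rewrite ltnNge -ltnS l1.
- set p := pdiv l.
  have pp : prime p by apply: pdiv_prime.
  have [m cop E] := pfactor_coprime pp l0.
  have K0 : (0 < logn p l)%N.
    by rewrite logn_gt0 mem_primes pp l0 pdiv_dvd.
  move: E; case Ek: (logn p l) K0 => [|k] // _ E.
  have m0 : (0 < m)%N by move: l0; rewrite E muln_gt0 => /andP[].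
  have npm : ~~ (p %| m)%N by rewrite -prime_coprime.
  have p2 : (2 <= p)%N by apply: prime_gt1.
  have ml : (m < l)%N.
    rewrite E -{1}(muln1 m) ltn_mul2l m0 /=.
    exact: leq_ltn_trans (ltn_expl k.+1 p2).
  have [Fm0 Fmb] := IH m ml m0.
  have El : l = (p ^ k.+1 * m)%N by rewrite E mulnC.
  have [A0 Ab] := A_bounds c hc k.+1.
  set A := (\sum_(i <- iota 0 k.+2) c i k.+1)%R in A0 Ab.
  rewrite El F_mul // nu_mul // !mult_INR !INR_expn S_INR.
  have pR : 2 <= INR p by have := le_INR 2 p (elimT ssrnat.leP p2); simpl; lra.
  have Rp0 : 0 < Rpower (INR p) alpha by rewrite /Rpower; apply: exp_pos.
  have Rm0 : 0 < Rpower (INR m) alpha by rewrite /Rpower; apply: exp_pos.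
  have Hk := key_ineq (INR p) pR.
  have Epk : Rpower (INR p ^ k.+1) alpha = Rpower (INR p) alpha ^ k.+1.
    rewrite -(Rpower_pow k.+1 (INR p)); last by lra.
    by rewrite Rpower_mult Rmult_comm -Rpower_mult Rpower_pow.
  have m0R : 0 < INR m by apply: lt_0_INR; apply/ssrnat.ltP.
  have pk0 : 0 < INR p ^ k.+1 by apply: pow_lt; lra.
  have -> : Rpower (INR p ^ k.+1 * INR m) alpha =
            Rpower (INR p) alpha ^ k.+1 * Rpower (INR m) alpha.
    by rewrite -Rpower_mult_distr // Epk.
  have B1 : A * Rpower (INR p) alpha ^ k.+1 <= (INR p + 1) ^ k.+1.
    apply: Rle_trans (_ : (2 * Rpower (INR p) alpha) ^ k.+1 <= _).
      rewrite Rpow_mult_distr; apply: Rmult_le_compat_r => //.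
      by apply: pow_le; lra.
    by apply: pow_incr; lra.
  split; first by apply: Rmult_le_pos.
  rewrite rearr.
  apply: Rmult_le_compat => //.
    by apply: Rmult_le_pos => //; apply: pow_le; lra.
  by apply: Rmult_le_pos => //; lra.
- rewrite /Fc /= big_cons big_nil /c_l /= /nu /=.
  rewrite big_nil /Rpower ln_1 Rmult_0_r exp_0 /= GRing.addr0 Rmult_1_r; split; [apply: Rle_0_1 | apply: Rle_refl].
Qed.

End Main2.

Local Open Scope R_scope.

Theorem lemma6p3 (c : nat -> nat -> R) (hc : cheb_coeffs c) (l : nat) (hl : (0 < l)%N) :
  (sumR [seq c_l c l d | d <- divisors l] / INR (nu l) <=
   Rpower (INR l) (- (ln (3 / 2) / ln 2))).
Proof.
have [F0 Fb] := main_claim c hc l hl.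
rewrite sumR_big -/(Fc c l) Rpower_Ropp -/alpha.
have N0 : 0 < INR (nu l) by apply: lt_0_INR; apply/ssrnat.ltP; apply: nu_gt0.
have P0 : 0 < Rpower (INR l) alpha by rewrite /Rpower; apply: exp_pos.
apply: (Rmult_le_reg_r (INR (nu l) * Rpower (INR l) alpha)).
  by apply: Rmult_lt_0_compat.
have -> : Fc c l / INR (nu l) * (INR (nu l) * Rpower (INR l) alpha) =
           Fc c l * Rpower (INR l) alpha by field; lra.
have -> : / Rpower (INR l) alpha * (INR (nu l) * Rpower (INR l) alpha) =
           INR (nu l) by field; lra.
exact: Fb.
Qed.
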